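(* If $\lambda\in C_4\cup C_5\cup C_7$, then $t_{\mathrm{cut}}(\lambda)=t^1_{\mathrm{conj}}(\lambda)=t^1_{\mathrm{MAX}}(\lambda)=+\infty$.
   Context: Let $G=\mathbb R^5$ with coordinates $(x,y,z,v,w)$ (the Cartan group, identity $0$), vector fields $X_1=\partial_x-\frac y2\partial_z-\frac{x^2+y^2}{2}\partial_w$, $X_2=\partial_y+\frac x2\partial_z+\frac{x^2+y^2}{2}\partial_v$; sub-Riemannian problem $\dot g=u_1X_1+u_2X_2$, fixed endpoints, minimize $\int\sqrt{u_1^2+u_2^2}\,dt$. For $\lambda=(\theta,c,\alpha,\beta)$, $\theta,\beta\in S^1$, $c\in\mathbb R$, $\alpha\ge0$: $\mathrm{Exp}(\lambda,t)=g(t)$ with $g(0)=0$, $\dot g=\cos\theta(t)X_1+\sin\theta(t)X_2$, $\dot\theta=c$, $\dot c=-\alpha\sin(\theta-\beta)$, $(\theta(0),c(0))=(\theta,c)$. $E=\frac{c^2}2-\alpha\cos(\theta-\beta)$; $C_4=\{\alpha>0,E=-\alpha\}$, $C_5=\{\alpha>0,E=\alpha,\theta-\beta=\pi\}$, $C_7=\{\alpha=c=0\}$. $t_{\mathrm{cut}}(\lambda)=\sup\{t>0:\mathrm{Exp}(\lambda,\cdot)|_{[0,t]}\text{ is length minimizing}\}$; $t^1_{\mathrm{conj}}(\lambda)=\sup\{t>0:\mathrm{Exp}(\lambda,\cdot)|_{[0,t]}\text{ is locally optimal}\}$ (minimizing among admissible curves with same endpoints in a $C([0,t],G)$-neighborhood).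 The first Maxwell time $t^1_{\mathrm{MAX}}$ is defined to be $+\infty$ on $C_3\cup C_4\cup C_5\cup C_7$ (where $C_3=\{\alpha>0,E=\alpha,\theta-\beta\neq\pi\}$). *)

(* Defs.v *)
From HB Require Import structures.
From mathcomp Require Import all_boot all_order all_algebra.
From mathcomp Require Import all_classical all_reals all_analysis.
Set Implicit Arguments. Unset Strict Implicit. Unset Printing Implicit Defensive.
Import Order.TTheory GRing.Theory Num.Theory.
Import numFieldNormedType.Exports.
Local Open Scope classical_set_scope.
Local Open Scope ring_scope.

Section Cartan.
Variable R : realType.

(* A point (x,y,z,v,w) of the Cartan group G = R^5; identity = origin. *)
Record pt := Pt { px : R; py : R; pz : R; pv : R; pw : R }.

Definition origin : pt := Pt 0 0 0 0 0.

(* u1 X1 + u2 X2 evaluated at p, with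
   X1 = d_x - y/2 d_z - (x^2+y^2)/2 d_w,
   X2 = d_y + x/2 d_z + (x^2+y^2)/2 d_v. *)
Definition field (p : pt) (u1 u2 : R) : pt :=
  Pt u1 u2
     (- (py p / 2) * u1 + (px p / 2) * u2)
     (((px p) ^+ 2 + (py p) ^+ 2) / 2 * u2)
     (- (((px p) ^+ 2 + (py p) ^+ 2) / 2) * u1).

Definition coords : seq (pt -> R) := [:: px; py; pz; pv; pw].

Definition leb := (@lebesgue_measure R).

(* Admissible curve on [0,T]: controls u1,u2 in L^infinity([0,T])
   (measurable and bounded), and g a (Caratheodory) solution of
   g' = u1 X1(g) + u2 X2(g), written in integral form. *)
Definition admissible (T : R) (u1 u2 : R -> R) (g : R -> pt) : Prop :=
  [/\ 0 <= T,
      measurable_fun `[0, T] u1,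
      measurable_fun `[0, T] u2,
      (exists M : R, forall s, s \in `[0, T] -> `|u1 s| <= M /\ `|u2 s| <= M) &
      forall c, c \in coords ->
        leb.-integrable `[0, T]
           (fun s => (c (field (g s) (u1 s) (u2 s)))%:E) /\
        forall t, t \in `[0, T] ->
          c (g t) = c (g 0) + Rintegral leb `[0, t]
                                (fun s => c (field (g s) (u1 s) (u2 s)))].

Definition sr_length (T : R) (u1 u2 : R -> R) : R :=
  Rintegral leb `[0, T] (fun s => Num.sqrt (u1 s ^+ 2 + u2 s ^+ 2)).

(* Exp(lambda,.) : th, cc are theta(t), c(t); g(t) the geodesic. *)
Definition is_Exp (th0 c0 al be : R) (th cc : R -> R) (g : R -> pt) : Prop :=
  [/\ [/\ th 0 = th0, cc 0 = c0 & g 0 = origin],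
      (forall t : R, is_derive t (1 : R) th (cc t)),
      (forall t : R, is_derive t (1 : R) cc (- al * sin (th t - be))) &
      forall (t : R) c, c \in coords ->
        is_derive t (1 : R) (fun s => c (g s)) (c (field (g t) (cos (th t)) (sin (th t))))].

Definition minimizing (th : R -> R) (g : R -> pt) (t : R) : Prop :=
  forall T v1 v2 h, admissible T v1 v2 h -> h 0 = g 0 -> h T = g t ->
    sr_length t (fun s => cos (th s)) (fun s => sin (th s)) <= sr_length T v1 v2.

(* uniform (C([0,t],G)) distance via the max-norm on R^5 *)
Definition ptdist (p q : pt) : R :=
  Num.max `|px p - px q| (Num.max `|py p - py q|
    (Num.max `|pz p - pz q| (Num.max `|pv p - pv q| `|pw p - pw q|))).

Definition locally_optimal (th : R -> R) (g : R -> pt) (t : R) : Prop :=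
  exists2 eps : R, 0 < eps &
    forall v1 v2 h, admissible t v1 v2 h -> h 0 = g 0 -> h t = g t ->
      (forall s, s \in `[0, t] -> ptdist (h s) (g s) < eps) ->
      sr_length t (fun s => cos (th s)) (fun s => sin (th s)) <= sr_length t v1 v2.

Definition t_cut (th : R -> R) (g : R -> pt) : \bar R :=
  ereal_sup [set (t%:E)%E | t in [set t : R | 0 < t /\ minimizing th g t]].

Definition t1_conj (th : R -> R) (g : R -> pt) : \bar R :=
  ereal_sup [set (t%:E)%E | t in [set t : R | 0 < t /\ locally_optimal th g t]].

(* equality on S^1 = R / 2piZ *)
Definition eq_S1 (a b : R) : Prop := exists k : int, a = b + k%:~R * (2 * pi).

Definition energy (th c al be : R) : R := c ^+ 2 / 2 - al * cos (th - be).

Definition in_C3 (th c al be : R) : Prop :=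
  0 < al /\ energy th c al be = al /\ ~ eq_S1 (th - be) pi.
Definition in_C4 (th c al be : R) : Prop :=
  0 < al /\ energy th c al be = - al.
Definition in_C5 (th c al be : R) : Prop :=
  0 < al /\ energy th c al be = al /\ eq_S1 (th - be) pi.
Definition in_C7 (th c al be : R) : Prop :=
  al = 0 /\ c = 0.

End Cartan.

(* Main.v *)
Require Import Defs.
From HB Require Import structures.
From mathcomp Require Import all_boot all_order all_algebra.
From mathcomp Require Import all_classical all_reals all_analysis.
From mathcomp Require Import measurable_realfun lebesgue_integrable.
From mathcomp Require Import ring lra.
Import Order.TTheory GRing.Theory Num.Theory.
Import numFieldNormedType.Exports.
Local Open Scope classical_set_scope.
Local Open Scope ring_scope.

Lemma decr0 (R : realType) (f df : R -> R) :
  (forall x : R, is_derive x (1:R) f (df x)) -> (forall x, 0 < x -> df x <= 0) ->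
  forall t, 0 <= t -> f t <= f 0.
Proof.
move=> H Hn t; rewrite le_eqVlt => /orP [/eqP <- // | t0].
have [c cin E] := MVT t0 (fun (x : R) _ => H x)
  (derivable_within_continuous (fun (x : R) _ => @ex_derive _ _ _ _ _ _ _ (H x))).
rewrite -subr_le0 E subr0.
rewrite in_itv /= in cin; case/andP: cin => c0 _.
by rewrite mulr_le0_ge0 ?Hn // ltW.
Qed.

Lemma cst0 (R : realType) (f df : R -> R) :
  (forall x : R, is_derive x (1:R) f (df x)) -> (forall x, 0 < x -> df x = 0) ->
  forall t, 0 <= t -> f t = f 0.
Proof.
move=> H Hn t t0; apply/eqP; rewrite eq_le decr0 //=; last by move=> x /Hn ->.
rewrite -lerN2.
apply: (@decr0 R (fun x => - f x) (fun x => - df x)) => //.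
by move=> x /Hn ->; rewrite oppr0.
Qed.

Lemma dcosB (R : realType) (f : R -> R) x a b :
  is_derive x (1:R) f a -> is_derive x (1:R) (fun s => cos (f s - b)) (- sin (f x - b) * a).
Proof.
move=> Hf.
have Hg : is_derive x (1:R) (fun s => f s - b) a.
  have := @is_deriveB _ _ _ f (cst b) x 1 a 0 Hf (is_derive_cst b x 1).
  by rewrite subr0.
exact: (@is_derive1_comp R cos (fun s => f s - b) x (- sin (f x - b)) a (is_derive_cos _) Hg).
Qed.

Lemma dsq (R : realType) (f : R -> R) x a :
  is_derive x (1:R) f a -> is_derive x (1:R) (fun s => f s ^+ 2) (2 * f x * a).
Proof.
move=> Hf; have := @is_deriveX _ _ f 2 x 1 a Hf.
by rewrite expr1 /= => H; apply: is_derive_eq H _; rewrite -mulr_natl ?mulr1 /=; rewrite /GRing.scale /=; ring.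
Qed.
Arguments dsq {R f x a}.
Arguments dcosB {R f x a} b.

Lemma cos_per (R : realType) (x : R) (k : int) : cos (x + k%:~R * (2 * pi)) = cos x.
Proof.
have P n y : cos (y + n%:R * (2 * pi)) = cos y :> R.
  rewrite -[RHS](periodicn (@cosD2pi R) n y).
  by rewrite mulr_natl (mulr_natl pi 2).
case: k => n; first exact: P.
have := P n.+1 (x - n.+1%:R * (2*pi)); rewrite subrK => ->.
by rewrite NegzE mulrNz mulNr.
Qed.

Lemma cc_zero (R : realType) (th0 c0 al be : R) th cc (g : R -> pt R) :
  0 <= al -> in_C4 th0 c0 al be \/ in_C5 th0 c0 al be \/ in_C7 th0 c0 al be ->
  is_Exp th0 c0 al be th cc g -> forall t, 0 <= t -> cc t = 0.
Proof.
move=> al0 HC [[th00 cc00 g00] Hth Hcc _].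
pose E s := cc s ^+ 2 / 2 - al * cos (th s - be).
have HE : forall x, is_derive x (1:R) E 0.
  move=> x.
  have h1 := dsq (Hcc x).
  have h2 := dcosB be (Hth x).
  have h3 := @is_deriveZ _ _ _ _ (2^-1) x 1 _ h1.
  have h4 := @is_deriveZ _ _ _ _ al x 1 _ h2.
  have h5 := @is_deriveB _ _ _ _ _ x 1 _ _ h3 h4.
  have -> : E = (2^-1 \*: (fun s => cc s ^+ 2) - al \*: (fun s => cos (th s - be))).
    by apply/funext => s; rewrite /E /= mulrC.
  apply: is_derive_eq h5 _.
  rewrite /GRing.scale /= !mulrA mulVf // mul1r; ring.
have HEc : forall t, 0 <= t -> E t = energy th0 c0 al be.
  move=> t t0; rewrite (@cst0 R E (fun _ => 0) HE (fun _ _ => erefl) t t0).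
  by rewrite /E th00 cc00.
have sq0 : forall y : R, y ^+ 2 = 0 -> y = 0.
  by move=> y /eqP; rewrite sqrf_eq0 => /eqP.
case: HC => [[alp En]|[[alp [En [k Hk]]]|[al00 c00]]].
- move=> t t0; apply: sq0; have := HEc t t0; rewrite En /E => Et.
  have := cos_le1 (th t - be); have := sqr_ge0 (cc t); nra.
- move=> t t0.
  pose V s := 1 + cos (th s - be).
  pose K := - (1 + al).
  pose X s := expR (K * s).
  have dV : forall x, is_derive x (1:R) V (- sin (th x - be) * cc x).
    move=> x; have h := dcosB be (Hth x).
    have h2 := @is_deriveD _ _ _ (cst (1:R)) (fun s => cos (th s - be)) x 1 _ _ (is_derive_cst (1:R) x 1) h.
    by rewrite add0r in h2.
  have dX : forall x, is_derive x (1:R) X (expR (K * x) * K).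
    move=> x.
    have h1 : is_derive x (1:R) (fun s => K * s) K.
      have := @is_deriveZ _ _ _ id K x 1 1 (is_derive_id x 1).
      by rewrite /GRing.scale /= mulr1.
    exact: (@is_derive1_comp R expR (fun s => K * s) x _ _ (is_derive_expR _) h1).
  have dW : forall x, is_derive x (1:R) (V * X)
      (V x *: (expR (K * x) * K) + X x *: (- sin (th x - be) * cc x)).
    by move=> x; apply: is_deriveM.
  have V0 : V 0 = 0.
    rewrite /V th00 Hk cos_per cospi; ring.
  have Vge0 : forall s, 0 <= V s.
    by move=> s; rewrite /V; have := cos_geN1 (th s - be); lra.
  have Wt : (V * X) t <= (V * X) 0.
    apply: (@decr0 R (V * X) _ dW) => // x x0.
    have Ex := HEc x (ltW x0); rewrite En /E in Ex.
    rewrite /GRing.scale /= /X.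
    have ep := expR_gt0 (K * x).
    have cs := cos2Dsin2 (th x - be).
    have c1 := cos_le1 (th x - be).
    have c2 := cos_geN1 (th x - be).
    have q1 := sqr_ge0 (sin (th x - be) + cc x).
    have key : - sin (th x - be) * cc x <= (1 + al) * V x.
      rewrite /V; nra.
    rewrite /K; nra.
  have W0 : (V * X) 0 = 0 by have -> : (V * X) 0 = V 0 * X 0 by []; rewrite V0 mul0r.
  rewrite W0 in Wt; have Wt2 : V t * X t <= 0 by [].
  have ep := expR_gt0 (K * t).
  have vt := Vge0 t.
  have Vt0 : V t = 0.
    rewrite /X in Wt2; apply/eqP; rewrite eq_le vt andbT.
    by rewrite -(pmulr_lle0 _ ep).
  apply: sq0; have := HEc t t0; rewrite En /E.
  move: Vt0; rewrite /V => Vt0; nra.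
- move=> t t0; rewrite (@cst0 R cc (fun x => - al * sin (th x - be)) Hcc _ t t0) ?cc00 //.
  by move=> x _; rewrite al00 oppr0 mul0r.
Qed.

Lemma key_ineq (R : realType) (T a b : R) (v1 v2 : R -> R) :
  0 <= T -> measurable_fun `[0, T] v1 -> measurable_fun `[0, T] v2 ->
  (@leb R).-integrable `[0, T] (EFin \o v1) -> (@leb R).-integrable `[0, T] (EFin \o v2) ->
  a ^+ 2 + b ^+ 2 = 1 ->
  a * Rintegral (@leb R) `[0, T] v1 + b * Rintegral (@leb R) `[0, T] v2 <= sr_length T v1 v2.
Proof.
move=> T0 m1 m2 i1 i2 ab.
have mD : measurable (`[0, T] : set (measurableTypeR R)) by exact: measurable_itv.
have ia : (@leb R).-integrable `[0, T] (EFin \o (fun s => a * v1 s)).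
  have := integrableZl mD a i1.
  by apply: eq_integrable => // x _ /=; rewrite EFinM.
have ib : (@leb R).-integrable `[0, T] (EFin \o (fun s => b * v2 s)).
  have := integrableZl mD b i2.
  by apply: eq_integrable => // x _ /=; rewrite EFinM.
have iab : (@leb R).-integrable `[0, T] (EFin \o (fun s => a * v1 s + b * v2 s)).
  have := integrableD mD ia ib.
  by apply: eq_integrable => // x _ /=; rewrite EFinD.
have ms : measurable_fun `[0, T] (fun s => Num.sqrt (v1 s ^+ 2 + v2 s ^+ 2)).
  apply: (measurableT_comp (continuous_measurable_fun (@sqrt_continuous R))).
  exact: measurable_funD (measurable_funX _ m1) (measurable_funX _ m2).
have i12 : (@leb R).-integrable `[0, T] (EFin \o (fun s => `|v1 s| + `|v2 s|)).
  have := integrableD mD (integrable_abse i1) (integrable_abse i2).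
  by apply: eq_integrable => // x _ /=; rewrite EFinD.
have isq : (@leb R).-integrable `[0, T] (EFin \o (fun s => Num.sqrt (v1 s ^+ 2 + v2 s ^+ 2))).
  apply: (le_integrable mD _ _ i12).
    by apply/measurable_EFinP.
  move=> x _ /=; rewrite lee_fin ger0_norm ?sqrtr_ge0 //.
  rewrite -sqrtr_sqr; apply: ler_wsqrtr.
  rewrite -(real_normK (num_real (v1 x))) -(real_normK (num_real (v2 x))).
  have := normr_ge0 (v1 x); have := normr_ge0 (v2 x); nra.
rewrite -(RintegralZl a mD i1) -(RintegralZl b mD i2) -(RintegralD mD ia ib).
apply: (le_Rintegral mD iab isq) => x _.
have cs : (a * v1 x + b * v2 x) ^+ 2 <= v1 x ^+ 2 + v2 x ^+ 2.
  have := sqr_ge0 (a * v2 x - b * v1 x).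
  have -> : v1 x ^+ 2 + v2 x ^+ 2 = (a ^+ 2 + b ^+ 2) * (v1 x ^+ 2 + v2 x ^+ 2) by rewrite ab mul1r.
  move=> h; nra.
apply: (le_trans (ler_norm _)).
rewrite -sqrtr_sqr; exact: ler_wsqrtr.
Qed.

Lemma px_in (R : realType) : (@px R) \in coords R.
Proof. by rewrite /coords inE eqxx. Qed.
Lemma py_in (R : realType) : (@py R) \in coords R.
Proof. by rewrite /coords !inE eqxx orbT. Qed.

Theorem theorem6p1 (R : realType) (th0 c0 al be : R)
    (th cc : R -> R) (g : R -> pt R)
    (t1_MAX : R -> R -> R -> R -> \bar R) :
  (forall a b d e, in_C3 a b d e \/ in_C4 a b d e \/ in_C5 a b d e \/ in_C7 a b d e ->
     t1_MAX a b d e = +oo%E) ->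
  0 <= al ->
  in_C4 th0 c0 al be \/ in_C5 th0 c0 al be \/ in_C7 th0 c0 al be ->
  is_Exp th0 c0 al be th cc g ->
  [/\ t_cut th g = +oo%E, t1_conj th g = +oo%E & t1_MAX th0 c0 al be = +oo%E].
Proof.
move=> HM al0 HC HE.
have Hc := @cc_zero R th0 c0 al be th cc g al0 HC HE.
case: (HE) => [[th00 cc00 g00] Hth Hcc Hg].
have thc : forall t, 0 <= t -> th t = th0.
  move=> t t0; rewrite -th00; apply: (@cst0 R th cc Hth _ t t0) => x x0.
  exact: Hc _ (ltW x0).
have lin : forall (k x : R), is_derive x (1:R) (fun s => k * s) k.
  move=> k x; have := @is_deriveZ _ _ _ id k x 1 1 (is_derive_id x 1).
  by rewrite /GRing.scale /= mulr1.
have gx : forall t, 0 <= t -> px (g t) = cos th0 * t.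
  move=> t t0.
  have df : forall x, is_derive x (1:R) (fun s => px (g s) - cos th0 * s) (cos (th x) - cos th0).
    move=> x; have h1 := Hg x _ (px_in R).
    exact: (@is_deriveB _ _ _ (fun s => px (g s)) (fun s => cos th0 * s) x 1 _ _ h1 (lin _ x)).
  have Hn : forall x, 0 < x -> cos (th x) - cos th0 = 0.
    by move=> x x0; rewrite thc ?subrr // ltW.
  have := @cst0 R _ _ df Hn t t0.
  by rewrite g00 /= mulr0 subr0 => /eqP; rewrite subr_eq0 => /eqP.
have gy : forall t, 0 <= t -> py (g t) = sin th0 * t.
  move=> t t0.
  have df : forall x, is_derive x (1:R) (fun s => py (g s) - sin th0 * s) (sin (th x) - sin th0).
    move=> x; have h1 := Hg x _ (py_in R).
    exact: (@is_deriveB _ _ _ (fun s => py (g s)) (fun s => sin th0 * s) x 1 _ _ h1 (lin _ x)).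
  have Hn : forall x, 0 < x -> sin (th x) - sin th0 = 0.
    by move=> x x0; rewrite thc ?subrr // ltW.
  have := @cst0 R _ _ df Hn t t0.
  by rewrite g00 /= mulr0 subr0 => /eqP; rewrite subr_eq0 => /eqP.
have Hmin : forall t, 0 < t -> minimizing th g t.
  move=> t t0 T v1 v2 h [T0 m1 m2 _ Hc'] h0 hT.
  have [i1 e1] := Hc' _ (px_in R).
  have [i2 e2] := Hc' _ (py_in R).
  have TT : T \in `[0, T] by rewrite in_itv /= T0 lexx.
  have E1 : px (g t) = Rintegral (@leb R) `[0, T] v1.
    by rewrite -hT (e1 T TT) h0 g00 /= add0r.
  have E2 : py (g t) = Rintegral (@leb R) `[0, T] v2.
    by rewrite -hT (e2 T TT) h0 g00 /= add0r.
  have mD : measurable (`[0, t] : set (measurableTypeR R)) by exact: measurable_itv.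
  have -> : sr_length t (fun s => cos (th s)) (fun s => sin (th s)) = t.
    rewrite /sr_length (@eq_Rintegral _ _ _ _ _ (fun _ => 1)); last first.
      by move=> s _; rewrite cos2Dsin2 sqrtr1.
    rewrite Rintegral_cst // mul1r /leb.
    have := lebesgue_measure_itv `[0, t]; rewrite /= lte_fin t0 /= => L.
    by rewrite L /= oppr0 addr0.
  have := @key_ineq R T (cos th0) (sin th0) v1 v2 T0 m1 m2 i1 i2 (cos2Dsin2 th0).
  rewrite -E1 -E2 gx ?gy ?(ltW t0) //.
  have := cos2Dsin2 th0; nra.
split.
- apply: hasNub_ereal_sup; last by exists 1; split => //; apply: Hmin.
  move=> [M hM].
  have h1 : 0 < `|M| + 1 by rewrite ltr_pwDr // normr_ge0.
  have := hM (`|M| + 1) (conj h1 (Hmin _ h1)).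
  have := ler_norm M; lra.
- apply: hasNub_ereal_sup; last first.
    exists 1; split => //; exists 1 => // v1 v2 h adm h0 ht _.
    exact: (Hmin 1 ltr01 1 v1 v2 h adm h0 ht).
  move=> [M hM].
  have h1 : 0 < `|M| + 1 by rewrite ltr_pwDr // normr_ge0.
  have : locally_optimal th g (`|M| + 1).
    exists 1 => // v1 v2 h adm h0 ht _.
    exact: (Hmin _ h1 _ v1 v2 h adm h0 ht).
  move=> lo; have := hM (`|M| + 1) (conj h1 lo).
  have := ler_norm M; lra.
- apply: HM; right; exact: HC.
Qed.
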